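(* In the security-second routing model, for any destination $d$, attacker $m$, source AS $s$, and deployment (set of secure ASes) $S\subseteq V$, $s$ stabilizes to a route of the same type as any route in $\mathrm{BPR}(s,\emptyset,m,d)$.
   Context: An AS graph is an undirected graph $G=(V,E)$ of ASes; each edge is labeled customer–provider or peer–peer. Routing is to a destination $d$; $d$ announces ''$d$'' to neighbors; each other AS selects at most one route and announces it (prepended with itself) per the export policy (Ex): a route whose next hop is a customer is announced to all neighbors, otherwise only to customers. A route at $s$ is a customer/peer/provider route according to the relation of its next hop to $s$; its length is its number of hops in the announced AS path. Insecure ASes rank routes by (LP) customer over peer over provider, then (SP) shorter, then (TB) a fixed deterministic tie-break; in the security-second model, each secure AS (member of $S$) additionally prefers secure routes (all ASes on the route in $S$) over insecure ones, applied between LP and SP. Attack: attacker $m\ne d$ (not a neighbor of $d$) announces the bogus path ''$m,d$'' via insecure BGP to all neighbors. Perceivable routes: a simple route $R=(v_{i-1},\dots,v_1,d)$ is perceivable at $v_i$ if either (1) $R$ does not contain $m$ and for every $0<j<i$, $v_j$ announcing $(v_j,\dots,d)$ to $v_{j+1}$ does not violate Ex, or (2) $v_1=m$ and for every $1<j<i$, $v_j$ announcing $(v_j,\dots,d)$ to $v_{j+1}$ does not violate Ex. $\mathrm{PR}(s,m,d)$ is the set of perceivable routes at $s$; $\mathrm{BPR}(s,\emptyset,m,d)$ is the set of routes in $\mathrm{PR}(s,m,d)$ that $s$ prefers over all other perceivable routes according to the ranking before the tie-break step when no AS is secure (i.e., those of best LP type and, among them, shortest length). *)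

(* Defs.v *)
From HB Require Import structures.
From mathcomp Require Import all_boot.
Set Implicit Arguments. Unset Strict Implicit. Unset Printing Implicit Defensive.

(** Business relationships. [r u v = Some Cust] means "v is a customer of u",
    [r u v = Some Peer] means "v is a peer of u", [r u v = Some Prov] means
    "v is a provider of u", [r u v = None] means u and v are not adjacent. *)
Inductive relt := Cust | Peer | Prov.

Definition relt_eqb (a b : relt) : bool :=
  match a, b with Cust, Cust | Peer, Peer | Prov, Prov => true | _, _ => false end.
Lemma relt_eqP : Equality.axiom relt_eqb.
Proof. by case; case; constructor. Qed.
HB.instance Definition _ := hasDecEq.Build relt relt_eqP.

Section AS.
Variable V : finType.
Variable r : V -> V -> option relt.

Definition wf_graph : Prop :=
  (forall u, r u u = None) /\
  (forall u v, r u v = Some Cust <-> r v u = Some Prov) /\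
  (forall u v, r u v = Some Peer <-> r v u = Some Peer).

Definition no_cp_cycle : Prop :=
  forall (u : V) (c : seq V),
    path (fun a b => r a b == Some Cust) u c -> last u c = u -> c = [::].

Definition adj (u v : V) : bool := r u v != None.

Definition lpr (o : option relt) : nat :=
  match o with Some Cust => 2 | Some Peer => 1 | _ => 0 end.

Variables (d m : V).

(** A route at [v] is the announced AS path [v_{i-1}; ...; v_1; d]
    (next hop first); its type is the relation of its next hop to [v];
    its length is [size p]. *)
Definition rtype (v : V) (p : seq V) : option relt := r v (head d p).

(** (Ex): [b] announcing a route whose next hop is [a] to [c] is allowed. *)
Definition exOK (a b c : V) : bool :=
  (r b a == Some Cust) || (r b c == Some Cust).

Definition perceivable (s : V) (p : seq V) : bool :=
  let w := rev (s :: p) in (* w = [v_0 = d; v_1; ...; v_i = s] *)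
  let i := size p in
  let exs k := all (fun j => exOK (nth d w j.-1) (nth d w j) (nth d w j.+1))
                   (iota k (i - k)) in
  [&& p != [::], last s p == d, uniq (s :: p),
      path (fun a b => adj a b || ((a == m) && (b == d))) s p &
      ((m \notin p) && exs 1) || ((nth d w 1 == m) && exs 2)].

Definition BPR (s : V) (p : seq V) : Prop :=
  perceivable s p /\
  forall q, perceivable s q ->
    lpr (rtype s q) < lpr (rtype s p) \/
    (lpr (rtype s q) = lpr (rtype s p) /\ size p <= size q).

Variable S : {set V}.
Variable tb : V -> seq V -> nat.   (* deterministic tie-break: lower rank wins *)

(** A route is secure iff all ASes on it are secure and it is not the bogus
    (insecurely announced) path through the attacker. *)
Definition secure (p : seq V) : bool := (m \notin p) && all (fun x => x \in S) p.

Definition better (v : V) (p q : seq V) : bool :=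
  let lp x := lpr (rtype v x) in
  let sc x := (v \in S) && secure x in
  (lp q < lp p) ||
  ((lp p == lp q) &&
   ((sc p && ~~ sc q) ||
    ((sc p == sc q) &&
     ((size p < size q) ||
      ((size p == size q) && (tb v p < tb v q)))))).

(** Routing state: [sel v] is the route (announced path, next hop first)
    selected by [v], for [v] other than [d] and [m]. *)
Variable sel : V -> option (seq V).

Definition ann (n : V) : option (seq V) :=
  if n == d then Some [:: d]
  else if n == m then Some [:: m; d]
  else omap (cons n) (sel n).

Definition exports (n v : V) : bool :=
  if (n == d) || (n == m) then true
  else match sel n with
       | Some (h :: _) => exOK h n v
       | _ => false
       end.

Definition offered (v : V) (p : seq V) : Prop :=
  exists n, [/\ adj v n, ann n = Some p, exports n v & v \notin p].

Definition stable : Prop :=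
  forall v, v != d -> v != m ->
    match sel v with
    | None => forall p, ~ offered v p
    | Some p => offered v p /\ (forall q, offered v q -> q <> p -> better v p q)
    end.

End AS.

(* Main.v *)
Require Import Defs.
From mathcomp Require Import all_boot zify.
Set Implicit Arguments. Unset Strict Implicit.
Section X.
Variables (V : finType) (r : V -> V -> option relt) (d m : V).
Definition exs' (w : seq V) k n := all (fun j => exOK r (nth d w j.-1) (nth d w j) (nth d w j.+1)) (iota k (n - k)).
Lemma ex_rcons w v k : 0 < k -> exs' (rcons w v) k (size w) = exs' w k (size w).-1 && ((k < size w) ==> exOK r (nth d w (size w).-2) (nth d w (size w).-1) v).
Proof.
move=> k0; rewrite /exs'; case: (ltnP k (size w)) => hk /=.
  have -> : size w - k = ((size w).-1 - k) + 1 by lia.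
  rewrite iotaD all_cat /= andbT; congr andb.
    apply: eq_in_all => j; rewrite mem_iota => /andP [_ hj].
    have hj' : j.+1 < size w by lia.
    have hj2 : j < size w by lia.
    have hj3 : j.-1 < size w by lia.
    by rewrite !nth_rcons hj' hj2 hj3.
  have -> : k + ((size w).-1 - k) = (size w).-1 by lia.
  have -> : ((size w).-1).+1 = size w by lia.
  have h1 : (size w).-1 < size w by lia.
  have h2 : (size w).-1.-1 < size w by lia.
  by rewrite !nth_rcons ltnn eqxx h1 h2.
have -> : size w - k = 0 by lia.
have -> : (size w).-1 - k = 0 by lia.
by rewrite andbT.

Qed.
Hypothesis md : m != d.
Local Notation perc := (perceivable r d m).
Lemma percS v h x q : h != m ->
  perc v (h :: x :: q) = [&& adj r v h || (v == m) && (h == d), v \notin h :: x :: q, perc h (x :: q) & exOK r x h v].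
Proof.
move=> hm; rewrite /perceivable.
rewrite -[rev (v :: _)]/(rev (v :: h :: x :: q)) rev_cons.
set W := rev (h :: x :: q).
have eW : W = rcons (rcons (rev q) x) h by rewrite /W !rev_cons.
have sW : size W = (size q).+2 by rewrite eW !size_rcons size_rev.
rewrite -/(exs' (rcons W v) 1 (size [:: h, x & q])) -/(exs' (rcons W v) 2 (size [:: h, x & q])).
rewrite -/(exs' W 1 (size [:: x & q])) -/(exs' W 2 (size [:: x & q])).
have -> : size [:: h, x & q] = size W by rewrite sW.
have -> : size [:: x & q] = (size W).-1 by rewrite sW.
rewrite !ex_rcons // !nth_rcons sW /=.
have -> : nth d W (size q) = x by rewrite eW nth_rcons size_rcons size_rev ltnSn nth_rcons size_rev ltnn eqxx.
have -> : nth d W (size q).+1 = h by rewrite eW nth_rcons size_rcons size_rev ltnn eqxx.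
have hW1 : (nth d W 1 == m) -> 0 < size q.
  rewrite eW; case: (q) => //= /eqP hh; by rewrite hh eqxx in hm.
have -> : (m \notin [:: h, x & q]) = (m \notin x :: q) by rewrite in_cons eq_sym (negbTE hm).
have -> : (2 < (size q).+2) = (0 < size q) by [].
move: hW1; case: (nth d W 1 == m); case: (0 < size q) => //= hW; try (by have := hW isT);
  case: (adj r v h || (v == m) && (h == d)); case: (v \in [:: h, x & q]);
  case: (exOK r x h v); case: (last x q == d); rewrite ?andbF ?andbT //=.
Qed.
Lemma perc1 v x : perc v [:: x] = [&& x == d, v != d & adj r v x || (v == m) && (x == d)].
Proof.
rewrite /perceivable /=; case: (eqVneq x d) => [->|] //=.
  by rewrite !inE md !andbT /=; case: (v == d).

Qed.
Lemma percm_intro v : v != m -> v != d -> adj r v m -> perc v [:: m; d].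
Proof.
move=> vm vd a; rewrite /perceivable /= !inE !eqxx md (negbTE vm) (negbTE vd) a /=.
by rewrite !andbT /= orbT.
Qed.
Lemma percm_elim v x q : perc v (m :: x :: q) -> [/\ q = [::], x = d & adj r v m || (v == m) && (m == d)].
Proof.
rewrite /perceivable => /and5P [_ hl hu hp hc].
rewrite in_cons eqxx /= in hc.
case: q hl hu hp hc => [|y q'] hl hu hp hc.
  by move: hl hp => /= /eqP -> /andP [-> _].
exfalso; move: hc => /andP [hc _].
have hs : 1 < size [:: v, m, x, y & q'] by [].
rewrite nth_rev // in hc.
have : nth d [:: v, m, x, y & q'] (size [:: v, m, x, y & q'] - 2) \in [:: x, y & q'].
  have -> : size [:: v, m, x, y & q'] - 2 = (size q').+2 by rewrite /=; lia.
  by rewrite /=; apply: mem_nth => /=; lia.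
move: hu => /= /andP [_ /andP [hmu _]].
have e : size [:: v, m, x, y & q'] - 2 = (size q').+2 by rewrite /=; lia.
rewrite e /= in hc; move/eqP: hc => -> h; by rewrite h in hmu.
Qed.
Lemma perc_nd v p : perc v p -> v != d.
Proof.
rewrite /perceivable => /and5P [hn hl hu _ _].
apply/negP => /eqP vd; subst v; move: hu => /= /andP [hd _].
case: p hn hl hd => // x p _ /= hl hd; move: (mem_last x p); by rewrite (eqP hl) (negbTE hd).
Qed.
Variables (S : {set V}) (tb : V -> seq V -> nat) (sel : V -> option (seq V)).
Hypothesis wf : wf_graph r.
Hypothesis st : stable r d m S tb sel.
Local Notation off := (offered r d m sel).
Local Notation rt := (rtype r d).

Lemma lpr_le2 o : lpr o <= 2. Proof. by case: o => [[]|]. Qed.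
Lemma lpr2 o : 2 <= lpr o -> o = Some Cust. Proof. by case: o => [[]|]. Qed.

Lemma exOK_cust h n v : exOK r h n v -> r v n != Some Prov -> r n h = Some Cust.
Proof.
case: wf => _ [hcp _]; rewrite /exOK => /orP [/eqP //|/eqP /hcp ->] //.
Qed.

Lemma sel_struct v p : v != d -> v != m -> sel v = Some p ->
  exists n, [/\ adj r v n, v \notin p &
    [\/ n = d /\ p = [:: d], n = m /\ p = [:: m; d] |
       [/\ n != d, n != m & exists h p', [/\ sel n = Some (h :: p'), p = n :: h :: p' & exOK r h n v]]]].
Proof.
move=> vd vm hs; have := st vd vm; rewrite hs => -[[n [ha hann hex hv]] _].
exists n; split => //; move: hann hex; rewrite /ann /exports.
case: (eqVneq n d) => [-> [<-]|nd]; first by constructor 1.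
case: (eqVneq n m) => [-> [<-]|nm /=]; first by constructor 2.
case hn: (sel n) => [[|h p']|] //= [<-] hx; constructor 3; split => //; by exists h, p'.
Qed.

Lemma sel_best v p q : v != d -> v != m -> sel v = Some p -> off v q -> lpr (rt v q) <= lpr (rt v p).
Proof.
move=> vd vm hs hq; have := st vd vm; rewrite hs => -[_ hb].
case: (eqVneq q p) => [-> //|qp]; have := hb q hq (fun e => negP qp (introT eqP e)).
rewrite /better => /orP [/ltnW //|/andP [/eqP -> _] //].
Qed.

Lemma sel_some v q : v != d -> v != m -> off v q -> exists p, sel v = Some p /\ lpr (rt v q) <= lpr (rt v p).
Proof.
move=> vd vm hq; case hs: (sel v) => [p|].
  by exists p; split => //; apply: sel_best hs hq.
by have := st vd vm; rewrite hs => /(_ q hq).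
Qed.

Lemma chain p : forall v, v != d -> v != m -> sel v = Some p -> forall x, x \in p -> x != d -> x != m ->
  exists p', sel x = Some p' /\ (rt v p = Some Cust -> rt x p' = Some Cust).
Proof.
elim: p => [|n t IH] v vd vm hs x; first by [].
have [n' [ha hv [[_ [-> ->]]|[_ [-> ->]]|[nd nm [h [p' [hn e hx]]]]]]] := sel_struct vd vm hs.
- by rewrite inE => /eqP ->; rewrite eqxx.
- by rewrite !inE => /orP [/eqP ->|/eqP ->]; rewrite eqxx // andbF.
case: e => en et; subst n' t.
rewrite in_cons => /orP [/eqP -> _ _|hxt xd xm].
  exists (h :: p'); split => // hc; rewrite /rtype /=.
  apply: exOK_cust hx _; move: hc; rewrite /rtype /= => ->; done.
have [p'' [hp'' hc]] := IH n nd nm hn x hxt xd xm.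
exists p''; split => // hcv; apply: hc; rewrite /rtype /=.
apply: exOK_cust hx _; move: hcv; rewrite /rtype /= => ->; done.
Qed.
Lemma notprov_of o : 1 <= lpr o -> o != Some Prov. Proof. by case: o => [[]|]. Qed.

Lemma sel_perc p : forall v, v != d -> v != m -> sel v = Some p -> 1 <= lpr (rt v p) -> perc v p.
Proof.
elim: p => [|n t IH] v vd vm hs hl; first by have [n' [_ _ [[_ //]|[_ //]|[_ _ [h [p' [_ //]]]]]]] := sel_struct vd vm hs.
have [n' [ha hv [[en e]|[en e]|[nd nm [h [p' [hn e hx]]]]]]] := sel_struct vd vm hs.
- by subst n'; case: e => -> ->; rewrite perc1 eqxx vd ha.
- by subst n'; case: e => -> ->; apply: percm_intro.
case: e => en et; subst n' t.
have hc : r n h = Some Cust.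
  apply: exOK_cust hx _; apply: notprov_of; exact: hl.
rewrite percS // ha hv hx /= andbT; apply: IH => //.
by rewrite /rtype /= hc.
Qed.

Lemma complete k : forall R v, size R <= k -> v != d -> v != m -> perc v R ->
  exists q, sel v = Some q /\ lpr (rt v R) <= lpr (rt v q).
Proof.
elim: k => [|k IH] [|h [|x q]] v //= hk vd vm.
- rewrite perc1 (negbTE vm) /= orbF => /and3P [/eqP -> _ ha].
  apply: sel_some => //; exists d; split => //.
    by rewrite /ann eqxx.
    by rewrite /exports eqxx.
    by rewrite inE.
case: (eqVneq h m) => [->|hm].
  move/percm_elim => [-> -> ha]; rewrite (negbTE vm) /= orbF in ha.
  apply: sel_some => //; exists m; split => //.
    by rewrite /ann (negbTE md) eqxx.
    by rewrite /exports eqxx orbT.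
    by rewrite !inE negb_or vm vd.
rewrite percS // (negbTE vm) /= orbF => /and4P [ha hv hp hx].
have hd := perc_nd hp.
have [q0 [hq0 hle]] := IH (x :: q) h hk hd hm hp.
have [n' [_ _ hstr]] := sel_struct hd hm hq0.
have [y [q0' eq0]] : exists y q0', q0 = y :: q0'.
  by case: hstr => [[_ ->]|[_ ->]|[_ _ [h' [p' [_ -> _]]]]]; do 2 eexists.
have hex : (r v h == Some Prov) || (r h y == Some Cust).
  case: (eqVneq (r v h) (Some Prov)) => //= hnp.
  have hc : r h x = Some Cust by apply: exOK_cust hx hnp.
  move: hle; rewrite /rtype eq0 /= hc /= => /lpr2 ->; done.
case hvq: (v \in q0).
  have [p' [hp' hc]] := chain hd hm hq0 hvq vd vm.
  exists p'; split => //.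
  move: hex => /orP [/eqP hpv|/eqP hcy].
    by rewrite /rtype /= hpv.
  by rewrite hc ?lpr_le2 // /rtype eq0.
have [p' [hp' hle']] : exists p', sel v = Some p' /\ lpr (rt v (h :: q0)) <= lpr (rt v p').
  apply: sel_some => //; exists h; split => //.
  - by rewrite /ann (negbTE hd) (negbTE hm) hq0.
  - rewrite /exports (negbTE hd) (negbTE hm) hq0 eq0 /exOK.
    case: wf => _ [hcp _].
    move: hex => /orP [/eqP /hcp ->|->]; by rewrite ?eqxx ?orbT.
  - by rewrite in_cons negb_or hvq andbT; apply: contra hv; rewrite inE => ->.
by exists p'.
Qed.
End X.

Lemma lpr_inj (o1 o2 : option relt) : o1 != None -> o2 != None -> lpr o1 = lpr o2 -> o1 = o2.
Proof. by case: o1 => [[]|]; case: o2 => [[]|]. Qed.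

Theorem mainTheorem7 (V : finType) (r : V -> V -> option relt)
    (d m s : V) (S : {set V}) (tb : V -> seq V -> nat)
    (sel : V -> option (seq V)) :
  wf_graph r -> no_cp_cycle r ->
  m != d -> ~~ adj r m d ->
  s != d -> s != m ->
  (forall v, injective (tb v)) ->
  stable r d m S tb sel ->
  forall R, BPR r d m s R ->
  exists R', sel s = Some R' /\ rtype r d s R' = rtype r d s R.
Proof.
move=> wf _ md _ sd sm _ st R [hR hB].
have [q [hq hle]] := complete md wf st (leqnn (size R)) sd sm hR.
exists q; split => //.
have hqn : rtype r d s q != None.
  have [n [ha _ hst]] := sel_struct st sd sm hq.
  by case: hst => [[en ->]|[en ->]|[_ _ [h [p' [_ -> _]]]]]; rewrite /rtype /=; try subst n.
have hRn : rtype r d s R != None.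
  move: hR; rewrite /perceivable => /and5P [hn _ _ hp _].
  case: R hn hp {hB hle} => [|h R'] //= _ /andP [hh _].
  move: hh => /orP [//|/andP [/eqP e _]].
  by rewrite e eqxx in sm.
apply: lpr_inj => //.
case: (ltnP 0 (lpr (rtype r d s q))) => hq1.
  have hpq := sel_perc md wf st sd sm hq hq1.
  case: (hB q hpq) => [hlt|[-> //]].
  by move: (leq_ltn_trans hle hlt); rewrite ltnn.
lia.
Qed.
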